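(* The space $\mathcal{X}$ of mm-isomorphism classes of mm-spaces, equipped with the box topology, is not $\sigma$-compact.
   Context: An mm-space is a triple $(X,d_X,\mu_X)$ where $(X,d_X)$ is a complete separable metric space and $\mu_X$ is a Borel probability measure on $X$. Two mm-spaces $X,Y$ are mm-isomorphic if there is an isometry $f\colon \operatorname{supp}\mu_X\to\operatorname{supp}\mu_Y$ with $f_*\mu_X=\mu_Y$; $\mathcal{X}$ is the set of mm-isomorphism classes. A parameter of $X$ is a Borel map $\varphi\colon [0,1)\to X$ with $\varphi_*\mathcal{L}^1=\mu_X$. The box distance $\square(X,Y)$ is the infimum of $\varepsilon\ge 0$ such that there exist parameters $\varphi$ of $X$, $\psi$ of $Y$ and a Borel set $I_0\subset[0,1)$ with $\mathcal{L}^1(I_0)\ge 1-\varepsilon$ and $|d_X(\varphi(s),\varphi(t))-d_Y(\psi(s),\psi(t))|\le\varepsilon$ for all $s,t\in I_0$; it is a metric on $\mathcal{X}$ and induces the box topology. *)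

(* Defs.v *)
From HB Require Import structures.
From mathcomp Require Import all_boot all_order all_algebra.
From mathcomp Require Import all_classical all_reals all_analysis.
Set Implicit Arguments. Unset Strict Implicit. Unset Printing Implicit Defensive.
Import Order.TTheory GRing.Theory Num.Theory.
Local Open Scope classical_set_scope.
Local Open Scope ring_scope.

Section MM.
Variable R : realType.

Definition is_metric (X : Type) (d : X -> X -> R) : Prop :=
  [/\ forall x y, 0 <= d x y,
      forall x y, d x y = 0 <-> x = y,
      forall x y, d x y = d y x &
      forall x y z, d x z <= d x y + d y z].

Definition d_cauchy (X : Type) (d : X -> X -> R) (u : nat -> X) : Prop :=
  forall e : R, 0 < e -> exists N : nat, forall m n, (N <= m)%N -> (N <= n)%N ->
    d (u m) (u n) < e.

Definition d_converges (X : Type) (d : X -> X -> R) (u : nat -> X) (x : X) : Prop :=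
  forall e : R, 0 < e -> exists N : nat, forall n, (N <= n)%N -> d (u n) x < e.

Definition d_complete (X : Type) (d : X -> X -> R) : Prop :=
  forall u : nat -> X, d_cauchy d u -> exists x, d_converges d u x.

Definition d_separable (X : Type) (d : X -> X -> R) : Prop :=
  exists s : nat -> X, forall x (e : R), 0 < e -> exists n, d x (s n) < e.

Definition d_open (X : Type) (d : X -> X -> R) (A : set X) : Prop :=
  forall x, A x -> exists2 r : R, 0 < r & [set y | d x y < r] `<=` A.

Record mmspace := MMSpace {
  mm_disp : measure_display;
  mm_carrier : measurableType mm_disp;
  mm_dist : mm_carrier -> mm_carrier -> R;
  mm_metric : is_metric mm_dist;
  mm_complete : d_complete mm_dist;
  mm_separable : d_separable mm_dist;
  mm_borel : (@measurable _ mm_carrier) = <<s d_open mm_dist >>;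
  mm_measure : probability mm_carrier R
}.

Definition I01 : set R := [set t | 0 <= t < 1].

Definition is_parameter (X : mmspace) (phi : R -> mm_carrier X) : Prop :=
  measurable_fun I01 phi /\
  forall A : set (mm_carrier X), measurable A ->
    (@lebesgue_measure R) (I01 `&` phi @^-1` A) = mm_measure X A.

Definition box (X Y : mmspace) : R :=
  inf [set e : R | 0 <= e /\
    exists (phi : R -> mm_carrier X) (psi : R -> mm_carrier Y) (I0 : set R),
      [/\ is_parameter phi /\ is_parameter psi,
          measurable I0, I0 `<=` I01,
          ((1 - e)%:E <= (@lebesgue_measure R) I0)%E &
          forall s t, I0 s -> I0 t ->
            `| mm_dist (phi s) (phi t) - mm_dist (psi s) (psi t) | <= e]].

(** Open sets and compact sets for the box topology (topology induced by
    the box (pseudo)metric on mm-spaces; it is the pullback of the box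
    topology on the quotient by mm-isomorphism). *)
Definition box_open (U : mmspace -> Prop) : Prop :=
  forall X, U X -> exists2 r : R, 0 < r & forall Y, box X Y < r -> U Y.

Definition box_compact (K : mmspace -> Prop) : Prop :=
  forall (I : Type) (U : I -> mmspace -> Prop),
    (forall i, box_open (U i)) -> (forall X, K X -> exists i, U i X) ->
    exists2 J : set I, finite_set J &
      forall X, K X -> exists2 i, J i & U i X.

Definition box_sigma_compact : Prop :=
  exists K : nat -> mmspace -> Prop,
    (forall n, box_compact (K n)) /\ forall X : mmspace, exists n, K n X.

End MM.

(* Main.v *)
From HB Require Import structures.
From mathcomp Require Import all_boot all_order all_algebra.
From mathcomp Require Import all_classical all_reals all_analysis.
From mathcomp Require Import lra ring.
Require Import Defs.
Unset Printing Implicit Defensive.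
Import Order.TTheory GRing.Theory Num.Theory.
Import numFieldNormedType.Exports.
Local Open Scope classical_set_scope.
Local Open Scope ring_scope.
Section Gen.
Variable R : realType.
Context d' (U : measurableType d') (m : {measure set U -> \bar R}).
Variables (Dom : set U) (f : nat -> U -> seq nat) (E : seq nat -> set U).
Hypothesis hsize : forall k u, size (f k u) = k.
Hypothesis hE : forall a u, E a u <-> (Dom u /\ f (size a) u = a).
Hypothesis mE : forall a, measurable (E a).

Definition Dk (k : nat) (P : seq nat -> Prop) : set nat :=
  [set n | exists a, @pickle_inv (seq nat) n = Some a /\ size a = k /\ P a].
Definition EE (n : nat) : set U :=
  if @pickle_inv (seq nat) n is Some a then E a else set0.

Lemma gen_decomp k P : [set u | Dom u /\ P (f k u)] = \bigcup_(n in Dk k P) EE n.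
Proof.
apply/seteqP; split => u.
  move=> [hu hP]; exists (pickle (f k u)).
    by exists (f k u); rewrite pickleK_inv hsize.
  by rewrite /EE pickleK_inv; apply/hE; rewrite hsize.
move=> [n [a [hn [ha hP]]]]; rewrite /EE hn => /hE [hu hf].
by split => //; rewrite -ha hf.
Qed.

Lemma gen_triv k P : trivIset (Dk k P) EE.
Proof.
move=> n1 n2 [a1 [h1 [s1 _]]] [a2 [h2 [s2 _]]] [u []].
rewrite /EE h1 h2 => /hE [_ e1] /hE [_ e2].
have e : a1 = a2 by rewrite -e1 -e2 s1 s2.
have := @pickle_invK (seq nat) n1; have := @pickle_invK (seq nat) n2; rewrite h1 h2 /= e => -> //.
Qed.

Lemma gen_meas k P : measurable [set u | Dom u /\ P (f k u)].
Proof.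
rewrite gen_decomp; apply: bigcup_measurable => n _.
by rewrite /EE; case: pickle_inv => [a|] //; apply: mE.
Qed.

Lemma gen_sum k P : m [set u | Dom u /\ P (f k u)] =
  (\sum_(n <oo | n \in Dk k P) m (EE n))%E.
Proof.
rewrite gen_decomp measure_bigcup //; last exact: gen_triv.
by move=> n _; rewrite /EE; case: pickle_inv => [a|] //; apply: mE.
Qed.
End Gen.


Lemma ev_le (R : realType) d' (U : measurableType d') (m : {measure set U -> \bar R})
  (A : set U) (W : nat -> set U) (c : \bar R) :
  measurable A -> (forall k, measurable (W k)) ->
  (forall x, A x -> exists K, forall k, (K <= k)%N -> W k x) ->
  (forall k, (m (W k) <= c)%E) -> (m A <= c)%E.
Proof.
move=> mA mW ev hc.
pose V K := A `&` \bigcap_(k in [set k | (K <= k)%N]) W k.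
have mV K : measurable (V K).
  apply: measurableI => //; apply: bigcap_measurable; first by exists K => /=.
  by move=> k _; apply: mW.
have UV : \bigcup_K V K = A.
  apply/seteqP; split => x; first by move=> [K _ []].
  move=> hx; have [K hK] := ev x hx; exists K => //; split => // k /= hk; exact: hK.
have ndV : nondecreasing_seq V.
  move=> K K' KK'; apply/subsetPset => x [hx hw]; split => // k /= hk; apply: hw => /=; exact: leq_trans hk.
have mU : measurable (\bigcup_K V K) by rewrite UV.
have h := nondecreasing_cvg_mu (mu:=m) mV mU ndV.
rewrite UV in h; rewrite -(cvg_lim (@ereal_hausdorff R) h).
apply: lime_le; first by apply/cvg_ex; exists (m A).
apply: nearW => K /=; apply: le_trans (hc K).
apply: le_measure; [rewrite inE; exact: mV | rewrite inE; exact: mW |].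
by move=> x [_ hw]; apply: hw => /=.
Qed.
Section Param.
Variable R : realType.
Variable X : mmspace R.
Local Notation T := (mm_carrier X).
Local Notation d := (@mm_dist R X).
Local Notation mu := (mm_measure X).

Lemma dge0 x y : 0 <= d x y. Proof. by case: (mm_metric X). Qed.
Lemma d0 x y : d x y = 0 <-> x = y. Proof. by case: (mm_metric X). Qed.
Lemma dxx x : d x x = 0. Proof. by apply/d0. Qed.
Lemma dsym x y : d x y = d y x. Proof. by case: (mm_metric X). Qed.
Lemma dtri x y z : d x z <= d x y + d y z. Proof. by case: (mm_metric X). Qed.

Lemma open_meas (A : set T) : d_open d A -> measurable A.
Proof. by move=> oA; rewrite (mm_borel X); apply: sub_sigma_algebra. Qed.

Lemma ball_open x r : d_open d [set y | d x y < r].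
Proof.
move=> y /= hy; exists (r - d x y); first by rewrite subr_gt0.
move=> z /= hz; have := dtri x y z; lra.
Qed.

Lemma ball_meas x r : measurable [set y : T | d x y < r].
Proof. exact/open_meas/ball_open. Qed.

Lemma cball_meas x r : measurable [set y : T | d x y <= r].
Proof.
have -> : [set y : T | d x y <= r] = ~` [set y | r < d x y].
  by apply/seteqP; split => y /=; [move=> h; apply/negP; rewrite -leNgt | move/negP; rewrite -leNgt].
apply/measurableC/open_meas => y /= hy; exists (d x y - r); first by rewrite subr_gt0.
move=> z /= hz; have h := dtri x z y; rewrite (dsym z y) in h; lra.
Qed.


Definition sq : nat -> T := projT1 (cid (mm_separable X)).
Lemma sqP x e : 0 < e -> exists n, d x (sq n) < e.
Proof. exact: (projT2 (cid (mm_separable X))). Qed.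

Definition rho (k : nat) : R := (k.+1%:R)^-1.
Lemma rho_gt0 k : 0 < rho k. Proof. by rewrite /rho invr_gt0 ltr0n. Qed.
Lemma rho_le k l : (k <= l)%N -> rho l <= rho k.
Proof. by move=> kl; rewrite /rho lef_pV2 ?posrE ?ltr0n // ler_nat ltnS. Qed.
Lemma rho_small e : 0 < e -> exists k, rho k < e.
Proof.
move=> e0; have ie : 0 <= e^-1 by rewrite invr_ge0 ltW.
have h := archi_boundP ie.
exists (Num.Def.archi_bound e^-1); rewrite /rho invf_plt ?posrE ?ltr0n //.
by apply: (lt_le_trans h); rewrite ler_nat.
Qed.

Lemma Jex k x : exists j, d x (sq j) < rho k.
Proof. exact: sqP (rho_gt0 k). Qed.
Definition J k x : nat := ex_minn (Jex k x).
Lemma J_lt k x : d x (sq (J k x)) < rho k.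
Proof. by rewrite /J; case: ex_minnP. Qed.
Lemma J_min {k x i} : d x (sq i) < rho k -> (J k x <= i)%N.
Proof. by rewrite /J; case: ex_minnP => m _ h /h. Qed.

Lemma J_meas k j : measurable [set x : T | J k x = j].
Proof.
have -> : [set x : T | J k x = j] =
  [set x | d (sq j) x < rho k] `&` \bigcap_(i in [set i | (i < j)%N]) ~` [set x | d (sq i) x < rho k].
  apply/seteqP; split => x /=.
    move=> <-; split; first by rewrite dsym J_lt.
    move=> i /= ij; rewrite dsym => h; have := J_min h; rewrite leqNgt ij //.
  move=> [h1 h2]; apply/eqP; rewrite eqn_leq (J_min (_ : d x (sq j) < rho k)) /=; last by rewrite dsym.
  rewrite leqNgt; apply/negP => hj; apply: (h2 _ hj) => /=; rewrite dsym; exact: J_lt.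
apply: measurableI; first exact: ball_meas.
case: j => [|j].
  have -> : \bigcap_(i in [set i | (i < 0)%N]) ~` [set x : T | d (sq i) x < rho k] = setT.
    by apply/seteqP; split => // x _ i /=.
  exact: measurableT.
apply: bigcap_measurable; first by exists 0%N.
by move=> i _; apply/measurableC/ball_meas.
Qed.

Fixpoint addr (k : nat) (x : T) : seq nat :=
  if k is k'.+1 then J k' x :: addr k' x else [::].
Lemma size_addr k x : size (addr k x) = k.
Proof. by elim: k => //= k ->. Qed.

Definition C (a : seq nat) : set T := [set x | addr (size a) x = a].
Lemma C_nil : C [::] = setT. Proof. by apply/seteqP; split. Qed.
Lemma C_cons j b : C (j :: b) = [set x | J (size b) x = j] `&` C b.
Proof.
apply/seteqP; split => x; rewrite /C /=; first by case=> -> ->.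
by case=> -> ->.
Qed.
Lemma C_meas a : measurable (C a).
Proof.
elim: a => [|j b ih]; first by rewrite C_nil.
by rewrite C_cons; apply: measurableI => //; apply: J_meas.
Qed.
Lemma C_addr k x : C (addr k x) x.
Proof. by rewrite /C /= size_addr. Qed.
Lemma C_sub j b : C (j :: b) `<=` C b.
Proof. by rewrite C_cons => x []. Qed.
Lemma C_head j b x : C (j :: b) x -> d x (sq j) < rho (size b).
Proof. by rewrite C_cons => -[/= <- _]; apply: J_lt. Qed.

Definition mC (a : seq nat) : R := fine (mu (C a)).
Lemma mu_fin (A : set T) : measurable A -> mu A = (fine (mu A))%:E.
Proof.
move=> mA; rewrite fineK // ge0_fin_numE ?measure_ge0 //.
by apply: (le_lt_trans (probability_le1 _ mA)); rewrite ltry.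
Qed.
Lemma muC a : mu (C a) = (mC a)%:E.
Proof. exact/mu_fin/C_meas. Qed.
Lemma mC_ge0 a : 0 <= mC a.
Proof. by rewrite -lee_fin -muC measure_ge0. Qed.
Lemma mC_le1 a : mC a <= 1.
Proof. by rewrite -lee_fin -muC; apply: probability_le1; apply: C_meas. Qed.
Lemma mC_nil : mC [::] = 1.
Proof. by rewrite /mC C_nil probability_setT. Qed.

Definition S (b : seq nat) (n : nat) : R := \sum_(0 <= i < n) mC (i :: b).
Lemma S0 b : S b 0 = 0. Proof. by rewrite /S big_geq. Qed.
Lemma SS b n : S b n.+1 = S b n + mC (n :: b).
Proof. by rewrite /S big_nat_recr. Qed.
Lemma S_homo b : {homo S b : n m / (n <= m)%N >-> n <= m}.
Proof.
move=> n m; elim: m => [|m ih]; first by rewrite leqn0 => /eqP ->.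
rewrite leq_eqVlt => /orP[/eqP -> //|]; rewrite ltnS => /ih h.
by rewrite SS; apply: (le_trans h); rewrite lerDl mC_ge0.
Qed.

Lemma C_bigcup b : C b = \bigcup_j C (j :: b).
Proof.
apply/seteqP; split => x.
  move=> hx; exists (J (size b) x) => //; rewrite C_cons; split => //.
by move=> [j _]; apply: C_sub.
Qed.
Lemma C_triv b : trivIset setT (fun j => C (j :: b)).
Proof.
apply/trivIsetP => i j _ _ ij; apply/seteqP; split => // x [].
by rewrite !C_cons => -[/= hi _] [/= hj _]; move: ij; rewrite -hi -hj eqxx.
Qed.

Lemma S_cvg b : S b n @[n --> \oo] --> mC b.
Proof.
have h := @measure_semi_sigma_additive _ _ _ mu (fun j => C (j :: b))
  (fun j => C_meas _) (C_triv b).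
rewrite -C_bigcup in h.
have h2 : (fun n => \sum_(0 <= i < n) mu (C (i :: b))) @ \oo --> (mC b)%:E.
  by rewrite -muC; exact: (h (C_meas b)).
have e : (fine \o (fun n => \sum_(0 <= i < n) mu (C (i :: b)))) = S b.
  apply/funext => n /=; rewrite /S.
  transitivity (fine (\sum_(0 <= i < n) (mC (i :: b))%:E)).
    by congr fine; apply: eq_bigr => i _; exact: muC.
  by rewrite sumEFin.
by move/fine_cvg: h2; rewrite e.
Qed.
Lemma S_le b n : S b n <= mC b.
Proof.
rewrite -(cvg_lim (@Rhausdorff R) (S_cvg b)).
by apply: nondecreasing_cvgn_le; [exact: S_homo | apply/cvg_ex; exists (mC b); exact: S_cvg].
Qed.
Lemma S_ex b t : t < mC b -> exists n, t < S b n.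
Proof.
move=> tb; have [N _ hN] := cvgr_gt _ (S_cvg b) _ tb.
by exists N; apply: hN => /=.
Qed.

Fixpoint Lf (a : seq nat) : R := if a is j :: b then Lf b + S b j else 0.

Lemma S_ge0 b n : 0 <= S b n.
Proof. by rewrite -(S0 b); apply: S_homo. Qed.

Lemma Lf_cons j b : Lf b <= Lf (j :: b) /\ Lf (j :: b) + mC (j :: b) <= Lf b + mC b.
Proof.
split; first by rewrite /= lerDl S_ge0.
by rewrite /= -addrA -SS lerD2l S_le.
Qed.

Lemma Lf_bounds a : 0 <= Lf a /\ Lf a + mC a <= 1.
Proof.
elim: a => [|j b [h1 h2]]; first by rewrite /= mC_nil add0r.
have [h3 h4] := Lf_cons j b; split; [exact: le_trans h3 | exact: le_trans h2].
Qed.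

Definition nxt (t : R) (b : seq nat) : nat :=
  match pselect (exists j, t < Lf b + S b j.+1) with
  | left h => ex_minn h
  | right _ => 0%N
  end.

Fixpoint at_ (k : nat) (t : R) : seq nat :=
  if k is k'.+1 then nxt t (at_ k' t) :: at_ k' t else [::].
Lemma size_at k t : size (at_ k t) = k.
Proof. by elim: k => //= k ->. Qed.

Lemma nxt_spec t b : Lf b <= t < Lf b + mC b ->
  Lf (nxt t b :: b) <= t < Lf (nxt t b :: b) + mC (nxt t b :: b).
Proof.
move=> /andP[h1 h2].
have ex : exists j, t < Lf b + S b j.+1.
  have [n hn] : exists n, t - Lf b < S b n by apply: S_ex; lra.
  case: n hn => [|j hj]; first by rewrite S0; lra.
  by exists j; lra.
rewrite /nxt; case: pselect => [h|/(_ ex)//].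
case: ex_minnP => j hj hmin; rewrite /= -addrA -SS hj andbT.
case: j hj hmin => [|i] hj hmin; first by rewrite S0 addr0.
rewrite leNgt; apply/negP => hi; have := hmin _ hi; by rewrite ltnn.
Qed.

Lemma at_inv k t : I01 t -> Lf (at_ k t) <= t < Lf (at_ k t) + mC (at_ k t).
Proof.
move=> /= /andP[t0 t1]; elim: k => [|k ih]; first by rewrite /= mC_nil add0r t0 t1.
exact: nxt_spec.
Qed.

Lemma at_char a t : Lf a <= t < Lf a + mC a -> at_ (size a) t = a.
Proof.
elim: a => [//|j b ih] /andP[h1 h2].
have [h3 h4] := Lf_cons j b.
have hb : at_ (size b) t = b by apply: ih; apply/andP; split; lra.
rewrite /= hb; congr (_ :: _).
have ex : exists j, t < Lf b + S b j.+1 by exists j; move: h2; rewrite /= -addrA -SS.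
rewrite /nxt; case: pselect => [h|/(_ ex)//].
case: ex_minnP => j0 hj0 hmin.
have hj : t < Lf b + S b j.+1 by move: h2; rewrite /= -addrA -SS.
have := hmin _ hj; rewrite leq_eqVlt => /orP[/eqP //|lt].
exfalso; have hS := S_homo b j0.+1 j lt; clear lt hmin; move: h1 => /=; lra.
Qed.

Definition Tset (a : seq nat) : set R := [set t | I01 t /\ at_ (size a) t = a].

Lemma Tset_itv a : Tset a = [set` `[Lf a, Lf a + mC a[%R].
Proof.
have [b0 b1] := Lf_bounds a.
apply/seteqP; split => t /=.
  by move=> [ht <-]; rewrite in_itv /=; apply: at_inv.
rewrite in_itv /= => h; split; last exact: at_char.
move: h => /andP[h1 h2]; apply/andP; split; lra.
Qed.

Lemma Tset_meas a : measurable (Tset a).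
Proof. by rewrite Tset_itv; apply: measurable_itv. Qed.

Lemma leb_Tset a : lebesgue_measure (Tset a) = mu (C a).
Proof.
rewrite Tset_itv lebesgue_measure_itv /= muC.
have := mC_ge0 a; rewrite le_eqVlt => /orP[/eqP <-|h].
  by rewrite addr0 ltxx.
by rewrite lte_fin ltrDl h EFinD addrAC subee // add0e.
Qed.

Lemma hC a x : C a x <-> (setT x /\ addr (size a) x = a).
Proof. by split => [h|[]]. Qed.
Lemma hT a t : Tset a t <-> (I01 t /\ at_ (size a) t = a).
Proof. by []. Qed.

Lemma Aset_meas k P : measurable [set x : T | P (addr k x)].
Proof.
have -> : [set x : T | P (addr k x)] = [set x | setT x /\ P (addr k x)].
  by apply/seteqP; split => x //= [].
exact: (gen_meas _ _ _ _ _ size_addr hC C_meas).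
Qed.

Lemma Bset_meas k P : measurable [set t : R | I01 t /\ P (at_ k t)].
Proof. exact: (gen_meas _ _ _ _ _ size_at hT Tset_meas). Qed.

Lemma key k P : mu [set x : T | P (addr k x)] =
  lebesgue_measure [set t : R | I01 t /\ P (at_ k t)].
Proof.
have -> : [set x : T | P (addr k x)] = [set x | setT x /\ P (addr k x)].
  by apply/seteqP; split => x //= [].
rewrite (gen_sum _ _ _ mu _ _ _ size_addr hC C_meas) (gen_sum _ _ _ lebesgue_measure _ _ _ size_at hT Tset_meas).
apply: eq_eseriesr => n _; rewrite /EE; case: pickle_inv => [a|].
  exact: (esym (leb_Tset a)).
by rewrite !measure0.
Qed.

Lemma C_nonempty a : 0 < mC a -> exists x, C a x.
Proof.
move=> h; apply/set0P/negP => /eqP e; move: h; by rewrite /mC e measure0 ltxx.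
Qed.

Lemma at_pos k t : I01 t -> 0 < mC (at_ k t).
Proof. by move=> ht; have := at_inv k t ht; lra. Qed.

Lemma at_sub k l t : (k <= l)%N -> C (at_ l t) `<=` C (at_ k t).
Proof.
elim: l => [|l ih]; first by rewrite leqn0 => /eqP ->.
rewrite leq_eqVlt => /orP[/eqP -> //|]; rewrite ltnS => /ih h x hx.
by apply: h; apply: C_sub hx.
Qed.

Definition u (t : R) (k : nat) : T := sq (nxt t (at_ k t)).

Lemma u_near k t x : C (at_ k.+1 t) x -> d x (u t k) < rho k.
Proof. by move=> /C_head; rewrite size_at. Qed.

Lemma u_kl t k l : I01 t -> (k <= l)%N -> d (u t k) (u t l) < rho k + rho l.
Proof.
move=> ht kl; have [x hx] := C_nonempty _ (at_pos l.+1 t ht).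
have hk := u_near _ _ _ (at_sub _ _ t (kl : (k.+1 <= l.+1)%N) _ hx).
have hl := u_near _ _ _ hx.
have := dtri (u t k) x (u t l); rewrite (dsym (u t k) x); lra.
Qed.

Lemma u_cauchy t : I01 t -> d_cauchy d (u t).
Proof.
move=> ht e e0; have e2 : 0 < e / 2 by lra.
have [N hN] := rho_small _ e2.
exists N => m n hm hn.
have hm' := rho_le _ _ hm; have hn' := rho_le _ _ hn.
have [mn|nm] := leqP m n.
  have := u_kl _ _ _ ht mn; lra.
have := u_kl _ _ _ ht (ltnW nm); rewrite dsym; lra.
Qed.

Definition phi (t : R) : T := get [set x | d_converges d (u t) x].

Lemma phi_conv t : I01 t -> d_converges d (u t) (phi t).
Proof. by move=> ht; apply: getPex; apply: mm_complete; apply: u_cauchy. Qed.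

Lemma phi_near t k : I01 t -> d (u t k) (phi t) <= rho k.
Proof.
move=> ht; apply/ler_addgt0Pr => e e0.
have e2 : 0 < e / 2 by lra.
have [N hN] := phi_conv t ht _ e2.
have [M hM] := rho_small _ e2.
pose l := maxn k (maxn N M).
have kl : (k <= l)%N by rewrite leq_maxl.
have Nl : (N <= l)%N by rewrite /l (leq_trans (leq_maxl N M)) // leq_maxr.
have Ml : (M <= l)%N by rewrite /l (leq_trans (leq_maxr N M)) // leq_maxr.
have h1 := u_kl _ _ _ ht kl; have h2 := hN _ Nl; have h3 := rho_le _ _ Ml.
have := dtri (u t k) (u t l) (phi t); lra.
Qed.

Definition good (U : set T) (k : nat) (a : seq nat) : Prop :=
  forall y, d (sq (head 0%N a)) y <= rho k -> U y.

Lemma head_at k t : sq (head 0%N (at_ k.+1 t)) = u t k.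
Proof. by []. Qed.

Lemma good_phi U k t : I01 t -> good U k (at_ k.+1 t) -> U (phi t).
Proof. by move=> ht; apply; rewrite head_at phi_near. Qed.

Lemma open_ball (U : set T) x : d_open d U -> U x ->
  exists K, forall k, (K <= k)%N -> forall y, d x y <= 2 * rho k -> U y.
Proof.
move=> oU hx; have [r r0 hr] := oU x hx.
have r2 : 0 < r / 2 by lra.
have [K hK] := rho_small _ r2; exists K => k Kk y hy; apply: hr => /=.
have := rho_le _ _ Kk; lra.
Qed.

Lemma pre_open U : d_open d U ->
  [set t | I01 t /\ U (phi t)] = \bigcup_k [set t | I01 t /\ good U k (at_ k.+1 t)].
Proof.
move=> oU; apply/seteqP; split => t.
  move=> [ht hu]; have [K hK] := open_ball _ _ oU hu.
  exists K => //; split => // y hy; apply: (hK K (leqnn K)).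
  have := phi_near t K ht; rewrite head_at in hy.
  have := dtri (phi t) (u t K) y; rewrite (dsym (phi t) (u t K)); lra.
by move=> [k _ [ht hg]]; split => //; apply: good_phi hg.
Qed.

Lemma pre_open_meas U : d_open d U -> measurable [set t | I01 t /\ U (phi t)].
Proof.
move=> oU; rewrite pre_open //; apply: bigcupT_measurable => k.
exact: Bset_meas.
Qed.

Lemma mu_le_nu U : d_open d U -> (mu U <= lebesgue_measure [set t | I01 t /\ U (phi t)])%E.
Proof.
move=> oU.
apply: (ev_le _ _ _ _ _ (fun k => [set x | good U k (addr k.+1 x)])).
- exact: open_meas.
- move=> k; exact: Aset_meas.
- move=> x hx; have [K hK] := open_ball _ _ oU hx; exists K => k Kk y /= hy.
  apply: (hK k Kk); have := J_lt k x; have := dtri x (sq (J k x)) y; lra.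
- move=> k; have e := key k.+1 (good U k).
  apply: (@le_trans _ _ (lebesgue_measure [set t | I01 t /\ good U k (at_ k.+1 t)])).
    by rewrite -e; exact: lexx.
  apply: le_measure; rewrite ?inE.
  + exact: Bset_meas.
  + exact: pre_open_meas.
  + by move=> t [ht hg]; split => //; apply: good_phi hg.
Qed.

Lemma nu_le_mu U : d_open d U -> (lebesgue_measure [set t | I01 t /\ U (phi t)] <= mu U)%E.
Proof.
move=> oU.
apply: (ev_le R _ _ (@lebesgue_measure R) [set t | I01 t /\ U (phi t)] (fun k => [set t | I01 t /\ (C (at_ k.+1 t) `<=` U)]) (mu U)).
- exact: pre_open_meas.
- move=> k; exact: (Bset_meas k.+1 (fun a => C a `<=` U)).
- move=> t [ht hu]; have [K hK] := open_ball _ _ oU hu; exists K => k Kk; split => // x hx.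
  apply: (hK k Kk); have := u_near _ _ _ hx; have := phi_near t k ht.
  have := dtri (phi t) (u t k) x; rewrite (dsym (phi t) (u t k)) (dsym (u t k) x); lra.
- move=> k; have e := key k.+1 (fun a => C a `<=` U).
  apply: (@le_trans _ _ (mu [set x | C (addr k.+1 x) `<=` U])).
    by rewrite e; exact: lexx.
  apply: le_measure; rewrite ?inE.
  + exact: (Aset_meas k.+1 (fun a => C a `<=` U)).
  + exact: open_meas.
  + by move=> x hx; apply: hx; exact: (C_addr k.+1 x).
Qed.

Lemma I01_itv : @I01 R = [set` `[(0:R), 1[%R].
Proof. by apply/seteqP; split => t /=; rewrite in_itv. Qed.
Lemma I01_meas : measurable (@I01 R).
Proof. by rewrite I01_itv; apply: measurable_itv. Qed.

Definition phi0 (t : R) : T := if (0 <= t < 1) then phi t else sq 0%N.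

Lemma phi0_pre (U : set T) : @I01 R `&` phi0 @^-1` U = [set t | I01 t /\ U (phi t)].
Proof.
apply/seteqP; split => t [ht hu]; split => //;
  have e : phi0 t = phi t by rewrite /phi0 (ht : (0 <= t < 1) = true).
  by rewrite -e.
by rewrite /preimage /= e.
Qed.

Lemma phi0_meas : measurable_fun setT phi0.
Proof.
apply: (measurability (d_open d) (mm_borel X)) => _ [U oU <-].
have -> : setT `&` phi0 @^-1` U =
  [set t | I01 t /\ U (phi t)] `|` (~` @I01 R `&` [set _ | U (sq 0%N)]).
  apply/seteqP; split => t.
    move=> [_ hu]; have [ht|ht] := pselect (I01 t).
      have e : phi0 t = phi t by rewrite /phi0 (ht : (0 <= t < 1) = true).
      by left; split => //; rewrite -e.
    have e : phi0 t = sq 0%N.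
      rewrite /phi0; case: ifP => // h; exfalso; apply: ht; exact: h.
    by right; split => //; rewrite -e.
  move=> [[ht hu]|[ht hu]]; split => //.
    have e : phi0 t = phi t by rewrite /phi0 (ht : (0 <= t < 1) = true).
    by rewrite /preimage /= e.
  have e : phi0 t = sq 0%N.
    rewrite /phi0; case: ifP => // h; exfalso; apply: ht; exact: h.
  by rewrite /preimage /= e.
apply: measurableU; first exact: pre_open_meas.
apply: measurableI; first by apply: measurableC; exact: I01_meas.
by case: (pselect (U (sq 0%N))) => h;
  [rewrite (_ : [set _ | _] = setT) | rewrite (_ : [set _ | _] = set0)] => //;
  apply/seteqP; split.
Qed.

Lemma phi0_measI : measurable_fun (@I01 R) phi0.
Proof. exact: (measurable_funS measurableT (@subsetT _ _) phi0_meas). Qed.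

Definition nu (A : set T) : \bar R := lebesgue_measure (@I01 R `&` phi0 @^-1` A).
Let nu0 : nu set0 = 0%E.
Proof. by rewrite /nu preimage_set0 setI0 measure0. Qed.
Let nu_ge0 A : (0 <= nu A)%E.
Proof. exact: measure_ge0. Qed.
Let nu_sa : semi_sigma_additive nu.
Proof.
move=> F mF tF mUF; rewrite /nu preimage_bigcup setI_bigcupr.
apply: measure_semi_sigma_additive.
- by move=> n; apply: phi0_measI; [exact: I01_meas | exact: mF].
- apply/trivIsetP => i j _ _ ij; move/trivIsetP : tF => /(_ i j I I ij) h.
  apply/seteqP; split => // t [[_ hi] [_ hj]].
  have : (F i `&` F j) (phi0 t) by [].
  by rewrite h.
- by apply: bigcup_measurable => n _; apply: phi0_measI; [exact: I01_meas | exact: mF].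
Qed.
HB.instance Definition _ := isMeasure.Build _ _ _ nu nu0 nu_ge0 nu_sa.

Lemma nu_open U : d_open d U -> nu U = mu U.
Proof.
move=> oU; rewrite /nu phi0_pre; apply/eqP; rewrite eq_le; apply/andP; split.
  exact: nu_le_mu.
exact: mu_le_nu.
Qed.

Lemma dopen_setI : setI_closed (d_open d).
Proof.
move=> A B oA oB x [hA hB]; have [r1 r10 h1] := oA x hA; have [r2 r20 h2] := oB x hB.
exists (Num.min r1 r2); first by rewrite lt_min r10 r20.
move=> y /= hy; move: hy; rewrite lt_min => /andP[y1 y2]; split; [exact: h1 | exact: h2].
Qed.

Lemma exists_param : exists f : R -> T, is_parameter f.
Proof.
exists phi0; split; first exact: phi0_measI.
move=> A mA.
have h := @measure_unique _ R T (d_open d) (fun _ => setT) (mm_borel X) dopen_setI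
  (fun _ => _) _ mu nu (fun U oU => esym (nu_open U oU)) _ A mA.
rewrite h //.
- move=> _ x _; exists 1 => //.
- by apply/seteqP; split => // x _; exists 0%N.
- by move=> _; apply: (le_lt_trans (probability_le1 mu measurableT)); rewrite ltry.
Qed.
End Param.
Section Special.
Variable R : realType.

Definition w (k : nat) : R := 1 / (2 ^ (k + 1))%:R.
Lemma w_gt0 k : 0 < w k. Proof. by rewrite /w divr_gt0 // ltr0n expn_gt0. Qed.
Lemma w_ge0 k : 0 <= w k. Proof. exact/ltW/w_gt0. Qed.
Lemma w_le0 k : w k <= w 0.
Proof.
rewrite /w !div1r lef_pV2 ?posrE ?ltr0n ?expn_gt0 // ler_nat.
by rewrite leq_pexp2l // leq_add2r.
Qed.

Definition wm : {measure set nat -> \bar R} := mseries (fun k => mscale (NngNum (w_ge0 k)) (@dirac _ nat k R)) 0.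

Lemma wm_setT : wm setT = 1%E.
Proof.
rewrite /wm /mseries.
have h := @cvg_geometric_eseries_half R 1 0.
rewrite expr0 divr1 in h.
apply: (cvg_lim (@ereal_hausdorff R)).
move: h; apply: cvg_trans; apply: near_eq_cvg; apply: nearW => n /=.
rewrite /eseries /=; apply: eq_bigr => k _.
by rewrite /mscale /= diracT mule1.
Qed.

Lemma wm_single k : ((w k)%:E <= wm [set k])%E.
Proof.
rewrite /wm /mseries.
apply: le_trans (nneseries_lim_ge k.+1 _); last first.
  by move=> n _ _; apply: measure_ge0.
rewrite big_nat_recr //= /mscale /= diracE.
rewrite (_ : k \in [set k] = true); last by apply/mem_set.
rewrite mule1; apply: (@le_trans _ _ (0 + (w k)%:E)%E); first by rewrite add0e.
apply: leeD => //; apply: sume_ge0 => i _; apply: mule_ge0; [rewrite lee_fin; exact: w_ge0 | exact: measure_ge0].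
Qed.

Definition pm : probability nat R := mnormalize wm (@dirac _ nat 0%N R).

Lemma pmE A : pm A = wm A.
Proof.
rewrite /pm /= /mnormalize wm_setT /=.
rewrite invr1; case: ifPn => [/orP[]|_]; [by rewrite onee_eq0 | by [] | by rewrite mule1].
Qed.

Lemma pm_miss (A : set nat) k : ~ A k -> (pm A <= (1 - w k)%:E)%E.
Proof.
move=> hk; have sub : A `<=` ~` [set k] by move=> x hx /= xk; apply: hk; rewrite -xk.
apply: (@le_trans _ _ (pm (~` [set k]))).
  by apply: le_measure; [rewrite inE | rewrite inE | exact: sub].
rewrite probability_setC // pmE EFinB; apply: leeB => //; exact: wm_single.
Qed.

End Special.

Section SpecialSpace.
Variable R : realType.
Variable M : nat -> nat.

Definition q (i : nat) : R := (if i is j.+1 then (M j)%:R else 0) + 1.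
Lemma q_ge1 i : 1 <= q i.
Proof. by rewrite /q lerDr; case: i. Qed.

Definition sd (i j : nat) : R := if i == j then 0 else q i + q j.

Lemma sd_ge2 i j : i != j -> 2 <= sd i j.
Proof. by rewrite /sd => /negbTE ->; have := q_ge1 i; have := q_ge1 j; lra. Qed.

Lemma sd_metric : is_metric sd.
Proof.
split.
- move=> x y; rewrite /sd; case: eqP => // _; have := q_ge1 x; have := q_ge1 y; lra.
- move=> x y; split; last by move=> ->; rewrite /sd eqxx.
  rewrite /sd; case: eqP => // _ h; exfalso; have := q_ge1 x; have := q_ge1 y; lra.
- by move=> x y; rewrite /sd eq_sym addrC.
- move=> x y z; have := q_ge1 x; have := q_ge1 y; have := q_ge1 z; rewrite /sd.
  case: ifP => /eqP h1; case: ifP => /eqP h2; case: ifP => /eqP h3;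
    try (by exfalso; subst; auto); try subst; lra.
Qed.

Lemma sd_complete : d_complete sd.
Proof.
move=> v hv; have [N hN] := hv 1 ltr01.
exists (v N) => e e0; exists N => n hn.
have : sd (v n) (v N) < 1 by apply: hN.
case: (eqVneq (v n) (v N)) => [->|ne]; first by rewrite /sd eqxx.
by have := sd_ge2 _ _ ne; lra.
Qed.

Lemma sd_separable : d_separable sd.
Proof. by exists id => x e e0; exists x; rewrite /sd eqxx. Qed.

Lemma sd_borel : (@measurable _ nat) = <<s d_open sd >>.
Proof.
apply/seteqP; split => A _ //; apply: sub_sigma_algebra => x hx.
exists 1 => // y /= hy; case: (eqVneq x y) => [<-//|ne].
by have := sd_ge2 _ _ ne; lra.
Qed.

Definition Xs : mmspace R := MMSpace sd_metric sd_complete sd_separable sd_borel (pm R).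

Lemma Xs_far n (A : set nat) : ((1 - w R n.+1)%:E < pm R A)%E -> A 0%N /\ A n.+1.
Proof.
move=> h; split; apply/not_notP => hA.
  have := pm_miss R A 0%N hA; rewrite leNgt => /negP; apply; apply: le_lt_trans h.
  by rewrite lee_fin lerB // w_le0.
by have := pm_miss R A n.+1 hA; rewrite leNgt => /negP; apply.
Qed.

Lemma sd_far n : sd 0%N n.+1 = (M n)%:R + 2.
Proof. by rewrite /sd /= /q add0r; lra. Qed.

End SpecialSpace.

Section BoxPart.
Variable R : realType.
Local Notation leb := (@lebesgue_measure R).

Lemma leb_I01 : leb (@I01 R) = 1%E.
Proof.
rewrite I01_itv lebesgue_measure_itv /= lte_fin ltr01 /=.
by rewrite -EFinB subr0.
Qed.

Lemma leb_fin (B : set R) : measurable B -> B `<=` @I01 R ->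
  leb B = (fine (leb B))%:E /\ 0 <= fine (leb B) <= 1.
Proof.
move=> mB sB.
have h1 : (leb B <= 1)%E.
  rewrite -leb_I01; apply: le_measure => //; rewrite inE //; exact: I01_meas.
have h0 : (0 <= leb B)%E by apply: measure_ge0.
have hf : leb B \is a fin_num by rewrite ge0_fin_numE // (le_lt_trans h1) // ltry.
split; first by rewrite fineK.
by apply/andP; split; rewrite -lee_fin fineK.
Qed.

Lemma leb_part (I0 B : set R) (e : R) : measurable I0 -> measurable B ->
  I0 `<=` @I01 R -> B `<=` @I01 R -> ((1 - e)%:E <= leb I0)%E ->
  fine (leb B) <= fine (leb (I0 `&` B)) + e.
Proof.
move=> mI0 mB s0 sB h.
have mI : measurable (@I01 R) := I01_meas R.
have mIB : measurable (I0 `&` B) by apply: measurableI.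
have mD : measurable (@I01 R `\` I0) by apply: measurableD.
have [eB /andP[b0 b1]] := leb_fin _ mB sB.
have [eI /andP[i0 i1]] := leb_fin _ mI0 s0.
have [eIB _] := leb_fin _ mIB (fun x hx => sB x hx.2).
have [eD _] := leb_fin _ mD (fun x hx => hx.1).
have hsub : (leb B <= leb (I0 `&` B) + leb (@I01 R `\` I0))%E.
  apply: le_trans (measureU2 leb mIB mD).
  apply: le_measure; rewrite ?inE //; first exact: measurableU.
  move=> x hx; case: (pselect (I0 x)) => h0; first by left.
  by right; split => //; apply: sB.
have hD : leb (@I01 R `\` I0) = (1 - fine (leb I0))%:E.
  have fin1 : (leb (@I01 R) < +oo)%E by rewrite leb_I01 ltry.
  transitivity (leb (@I01 R) - leb (@I01 R `&` I0))%E.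
    by apply: measureD => //; exact: fin1.
  by rewrite leb_I01 setIidr // eI EFinB.
move: hsub; rewrite hD eB eIB -EFinD lee_fin => hs.
move: h; rewrite eI lee_fin => h; lra.
Qed.

Lemma box_pick (Y Z : mmspace R) r : box Y Z < r -> exists e, 0 <= e /\ e < r /\
  exists (phi : R -> mm_carrier Y) (psi : R -> mm_carrier Z) (I0 : set R),
      [/\ is_parameter phi /\ is_parameter psi,
          measurable I0, I0 `<=` @I01 R,
          ((1 - e)%:E <= leb I0)%E &
          forall s t, I0 s -> I0 t ->
            `| mm_dist (phi s) (phi t) - mm_dist (psi s) (psi t) | <= e].
Proof.
rewrite /box => h; have := inf_lt _ h; case.
  exists 1; split => //; have [phi hphi] := exists_param R Y.
  have [psi hpsi] := exists_param R Z.
  exists phi, psi, set0; split => //; rewrite subrr measure0 //.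
by move=> e [e0 hex] er; exists e; split => //; split.
Qed.

End BoxPart.

Section VPart.
Variable R : realType.
Local Notation leb := (@lebesgue_measure R).

Definition V (n m : nat) (Y : mmspace R) : Prop :=
  exists A : set (mm_carrier Y), measurable A /\
    ((1 - w R n.+1)%:E < mm_measure Y A)%E /\
    exists2 D : R, D < m%:R & forall a b, A a -> A b -> mm_dist a b <= D.

Lemma V_mono n m m' Y : (m <= m')%N -> V n m Y -> V n m' Y.
Proof.
move=> mm [A [mA [hA [D hD hd]]]]; exists A; split => //; split => //.
by exists D => //; apply: (lt_le_trans hD); rewrite ler_nat.
Qed.

Lemma V_cover n Y : exists m, V n m Y.
Proof.
pose x0 : mm_carrier Y := point.
pose B (k : nat) := [set y | mm_dist x0 y <= k%:R].
have mB k : measurable (B k) by apply: cball_meas.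
have [k hk] : exists k, ((1 - w R n.+1)%:E < mm_measure Y (B k))%E.
  apply/not_existsP => hn.
  have h : (mm_measure Y setT <= (1 - w R n.+1)%:E)%E.
    apply: (ev_le R _ _ (mm_measure Y) setT B) => //.
      move=> x _; exists (Num.Def.archi_bound (mm_dist x0 x)) => k hk.
      have := archi_boundP (dge0 R Y x0 x); rewrite /B /= => h.
      by apply: ltW; apply: (lt_le_trans h); rewrite ler_nat.
    by move=> k; rewrite leNgt; apply/negP => hlt; apply: (hn k).
  move: h; rewrite probability_setT lee_fin; have := w_gt0 R n.+1; lra.
exists (2 * k).+1; exists (B k); split => //; split => //.
exists (2 * k%:R); first by rewrite -natrM ltr_nat ltnSn.
move=> a b ha hb; have := dtri R Y a x0 b; rewrite (dsym R Y a x0).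
move: ha hb; rewrite /B /= => ha hb; lra.
Qed.

End VPart.

Section VOpen.
Variable R : realType.
Local Notation leb := (@lebesgue_measure R).

Lemma V_open n m : box_open (V R n m).
Proof.
move=> Y [A [mA [hA [D hD hd]]]].
have eA := mu_fin R Y A mA.
set a := fine (mm_measure Y A) in eA.
have ha : 1 - w R n.+1 < a by move: hA; rewrite eA lte_fin.
pose r := Num.min ((a - (1 - w R n.+1)) / 2) ((m%:R - D) / 2).
have r1 : r <= (a - (1 - w R n.+1)) / 2 by rewrite /r ge_min lexx.
have r2 : r <= (m%:R - D) / 2 by rewrite /r ge_min lexx orbT.
have r0 : 0 < r by rewrite /r lt_min; apply/andP; split; lra.
exists r => // Z hZ.
have [e [e0 [er [phi [psi [I0 [[hphi hpsi] mI0 sI0 hI0 hdist]]]]]]] := box_pick R Y Z r hZ.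
have mPA : measurable (@I01 R `&` phi @^-1` A) by apply: hphi.1 => //; exact: I01_meas.
pose S := I0 `&` (@I01 R `&` phi @^-1` A).
have mS : measurable S by apply: measurableI.
have hpart := leb_part R I0 (@I01 R `&` phi @^-1` A) e mI0 mPA sI0 (fun x hx => hx.1) hI0.
rewrite (hphi.2 A mA) -/a -/S in hpart.
have [eS /andP[sS0 sS1]] := leb_fin R S mS (fun x hx => sI0 x hx.1).
pose K := [set z : mm_carrier Z | forall eps, 0 < eps -> exists2 s, S s & mm_dist z (psi s) < eps].
have mK : measurable K.
  rewrite -(setCK K); apply: measurableC; apply: open_meas => z hz.
  have [eps [e0' hn]] : exists eps, 0 < eps /\ forall s, S s -> eps <= mm_dist z (psi s).
    apply/not_existsP => hne; apply: hz => eps e0'.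
    case: (pselect (exists2 s, S s & mm_dist z (psi s) < eps)) => // hno; exfalso.
    apply: (hne eps); split => // s hs; rewrite leNgt; apply/negP => hlt; apply: hno.
    by exists s.
  have e2 : 0 < eps / 2 by lra.
  exists (eps / 2) => // y /= hy hKy; have [s hs hsy] := hKy _ e2.
  have := hn s hs; have := dtri R Z z y (psi s); lra.
exists K; split => //; split.
  rewrite -(hpsi.2 K mK); apply: (@lt_le_trans _ _ (leb S)).
    by rewrite eS lte_fin; lra.
  apply: le_measure; rewrite ?inE //; first by apply: (hpsi.1 (I01_meas R)).
  move=> s hs; split; first exact: sI0 hs.1.
  by move=> eps e0'; exists s => //; rewrite dxx.
exists (D + e); first lra.
move=> z1 z2 h1 h2; apply/ler_addgt0Pr => eta eta0.
have e2 : 0 < eta / 2 by lra.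
have [s1 hs1 d1] := h1 _ e2; have [s2 hs2 d2] := h2 _ e2.
have := hdist s1 s2 hs1.1 hs2.1; rewrite ler_norml => /andP[k1 k2].
have := hd (phi s1) (phi s2) hs1.2.2 hs2.2.2.
have := dtri R Z z1 (psi s1) z2; have := dtri R Z (psi s1) (psi s2) z2.
rewrite (dsym R Z (psi s2) z2); lra.
Qed.

End VOpen.
From mathcomp Require Import finmap.

Theorem corollary1p2 (R : realType) : ~ box_sigma_compact R.
Proof.
move=> [K [cK covK]].
have hM : forall n, exists M, forall Y, K n Y -> V R n M Y.
  move=> n.
  have [J fJ hJ] := cK n nat (V R n) (fun m => V_open R n m) (fun Y _ => V_cover R n Y).
  have [B hB] : exists B, forall m, J m -> (m <= B)%N.
    exists (\max_(i <- finmap.enum_fset (fset_set J)) i) => m hm; apply: leq_bigmax_seq => //.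
    have : m \in fset_set J by rewrite in_fset_set //; apply: mem_set.
    by [].
  exists B => Y hY; have [i hi hV] := hJ Y hY; exact: V_mono (hB i hi) hV.
case: (choice hM) => M hMf.
have [n hn] := covK (Xs R M).
have [A [_ [hA [D hD hdA]]]] := hMf n _ hn.
have [A0 An] := Xs_far R n A hA.
have := hdA 0%N n.+1 A0 An.
change (sd R M 0%N n.+1 <= D -> False); rewrite sd_far; lra.
Qed.
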